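(* Let $p$ be an odd prime and $n,k$ positive integers. Then $\psi'(P^*(p^n,2^k))>\frac{19}{43}$ if and only if either ($p=3$, $n=1$, $k\ge1$) or ($p=5$, $n=1$, $k\le 2$).
   Context: For a finite group $G$, $\psi(G)=\sum_{x\in G} o(x)$ and $\psi'(G)=\psi(G)/\psi(\mathcal{C}_{|G|})$, where $\mathcal{C}_n$ is the cyclic group of order $n$. For an odd prime $p$ and positive integers $n,k$, $P^*(p^n,2^k)=A\rtimes\langle x\rangle$, where $A$ is elementary abelian of order $p^n$, $\langle x\rangle$ is cyclic of order $2^k$, and $x$ acts on $A$ by inversion. *)

(* Defs.v *)
From HB Require Import structures.
From mathcomp Require Import all_boot all_order all_algebra all_fingroup all_solvable.
Set Implicit Arguments. Unset Strict Implicit. Unset Printing Implicit Defensive.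
Import GRing.Theory Num.Theory.

Definition psi (gT : finGroupType) (G : {set gT}) : nat := \sum_(x in G) #[x]%g.

(* The cyclic group C_m of order m (for m >= 1) realised as Zp m inside 'Z_m. *)
Definition psi_cyclic (m : nat) : nat := psi (Zp m).

Definition psi' (gT : finGroupType) (G : {set gT}) : rat :=
  ((psi G)%:R / (psi_cyclic #|G|)%:R)%R.

(* Main.v *)
Require Import Defs.
From HB Require Import structures.
From mathcomp Require Import all_boot all_order all_algebra all_fingroup all_solvable zify ring.
Set Implicit Arguments. Unset Strict Implicit. Unset Printing Implicit Defensive.

Lemma sum_mulTI (gT : finGroupType) (H K : {group gT}) (F : gT -> nat) :
  H :&: K = 1%g -> \sum_(g in (H * K)%g) F g = \sum_(h in H) \sum_(k in K) F (h * k)%g.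
Proof.
move=> tiHK.
have -> : (H * K)%g = [set (u.1 * u.2)%g | u in setX H K].
  apply/setP=> g; apply/imset2P/imsetP.
    by case=> h k hH kK ->; exists (h, k) => //; rewrite in_setX hH kK.
  by case=> [[h k]]; rewrite in_setX => /andP[hH kK] ->; exists h k.
rewrite big_imset /=.
  rewrite pair_big_dep /=; apply: eq_bigl => -[a b]; by rewrite in_setX.
move=> [h1 k1] [h2 k2]; rewrite !in_setX /= => /andP[h1H k1K] /andP[h2H k2K] E.
have : (h2^-1 * h1)%g \in H :&: K.
  rewrite inE groupM ?groupV //=.
  have -> : (h2^-1 * h1 = k2 * k1^-1)%g.
    by rewrite -[h1](mulgK k1) E -!mulgA mulKg.
  by rewrite groupM ?groupV.
rewrite tiHK inE => /eqP e.
have eh : h1 = h2 by apply: (mulgI h2^-1%g); rewrite e mulVg.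
by subst h2; move/mulgI: E => ->.
Qed.

Lemma order_gen (gT : finGroupType) (q e : nat) (g y : gT) : prime q -> #[g]%g = q ^ e.+1 ->
  y \in <[g]>%g -> y \notin <[g ^+ q]>%g -> #[y]%g = #[g]%g.
Proof.
move=> pq og /cycleP[i ->] ni.
have cq : coprime q i.
  rewrite prime_coprime //; apply/negP => qi; case/negP: ni.
  by rewrite -(divnK qi) mulnC expgM mem_cycle.
rewrite orderXgcd og.
have : coprime (q ^ e.+1) i by rewrite coprimeXl.
by rewrite /coprime => /eqP ->; rewrite divn1.
Qed.

Lemma psi_cyc_pow (gT : finGroupType) (q e : nat) (g : gT) : prime q -> #[g]%g = q ^ e ->
  ((q + 1) * psi <[g]>%g = q ^ (2 * e + 1) + 1)%N.
Proof.
move=> pq; elim: e g => [|e IH] g og.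
  have g1 : g = 1%g by apply/eqP; rewrite -order_eq1 og.
  by rewrite g1 cycle1 /psi big_set1 order1 muln1 expn1.
have q0 : 0 < q by apply: prime_gt0.
have ogq : #[g ^+ q]%g = q ^ e.
  rewrite orderXdiv og; first by rewrite expnS mulKn.
  by rewrite expnS dvdn_mulr.
have sub : <[g ^+ q]>%g \subset <[g]>%g by rewrite cycle_subG mem_cycle.
rewrite /psi (bigID (fun y => y \in <[g ^+ q]>%g)) /=.
have -> : \sum_(i in <[g]>%g | i \in <[g ^+ q]>%g) #[i]%g = psi <[g ^+ q]>%g.
  rewrite /psi; apply: eq_bigl => y; apply/andP/idP => [[] //|yq].
  by split=> //; apply: (subsetP sub).
have -> : \sum_(i in <[g]>%g | i \notin <[g ^+ q]>%g) #[i]%g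
        = \sum_(i in <[g]>%g :\: <[g ^+ q]>%g) q ^ e.+1.
  apply: eq_big => [y|y]; first by rewrite !inE andbC.
  by case/andP=> yg yn; rewrite (order_gen pq og yg yn) og.
rewrite sum_nat_const cardsD (setIidPr sub) -!orderE og ogq mulnDr IH //.
have -> : 2 * e.+1 + 1 = (2 * e + 1).+2 by lia.
set t := q ^ e; set s := q ^ (2 * e + 1).
have hs : s = q * t * t by rewrite /s /t -!expnS -expnD; congr (_ ^ _); lia.
have h1 : q ^ e.+1 = q * t by rewrite expnS.
have h2 : q ^ (2 * e + 1).+2 = q * q * s by rewrite !expnS mulnA.
rewrite h1 h2 hs.
have ht : 0 < t by rewrite expn_gt0 q0.
have -> : q * t - t = (q - 1) * t by rewrite mulnBl mul1n.
have -> : q = (q - 1).+1 by lia.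
set u := q - 1. 
nia.
Qed.

Lemma psi_cyc_mul (gT : finGroupType) (a b : nat) (g : gT) : coprime a b -> #[g]%g = a * b ->
  (psi <[g]>%g = psi <[g ^+ b]>%g * psi <[g ^+ a]>%g)%N.
Proof.
move=> cab og.
have ab0 : 0 < a * b by rewrite -og order_gt0.
have a0 : 0 < a by move: ab0; rewrite muln_gt0 => /andP[].
have b0 : 0 < b by move: ab0; rewrite muln_gt0 => /andP[].
have oa : #[g ^+ b]%g = a by rewrite orderXdiv og ?dvdn_mull // mulnK.
have ob : #[g ^+ a]%g = b by rewrite orderXdiv og ?dvdn_mulr // mulKn.
have ti : <[g ^+ b]>%g :&: <[g ^+ a]>%g = 1%g.
  by apply: coprime_TIg; rewrite -!orderE oa ob.
have eq : (<[g ^+ b]> * <[g ^+ a]>)%g = <[g]>%g.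
  apply/eqP; rewrite eqEcard mul_subG ?cycle_subG ?mem_cycle //=.
  by rewrite TI_cardMg // -!orderE oa ob og.
rewrite /psi -eq sum_mulTI // big_distrl /=; apply: eq_bigr => h hH.
rewrite big_distrr /=; apply: eq_bigr => k kK.
apply: orderM.
  move: hH kK => /cycleP[i ->] /cycleP[j ->].
  by apply: commuteX2; apply: commuteX2.
apply: (coprime_dvdl (order_dvdG hH)); apply: (coprime_dvdr (order_dvdG kK)).
by rewrite -!orderE oa ob.
Qed.

Lemma order_odd_part (gT : finGroupType) (A : {group gT}) (x a y : gT) (k : nat) :
  A :&: <[x]>%g = 1%g -> a \in A -> y \in <[x]>%g -> #[y]%g = 2 ^ k.+1 ->
  (a ^ y = a^-1)%g -> #[a * y]%g = 2 ^ k.+1.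
Proof.
move=> ti aA yx oy cy.
have cy' : (a ^ y^-1 = a^-1)%g.
  have := conjgK y a; rewrite cy conjVg => h.
  by rewrite -{2}h invgK.
have sq : ((a * y) ^+ 2 = y ^+ 2)%g.
  by rewrite expgS expg1 -mulgA (mulgA y) (conjgCV y a) cy' !mulgA mulgV mul1g expgS expg1.
have d1 : #[a * y]%g %| 2 ^ k.+1.
  rewrite order_dvdn expnS expgM sq -expgM -expnS -oy expg_order //.
apply/eqP; rewrite eqn_dvd d1 /=.
case: (boolP (odd #[a * y]%g)) => od.
  have : #[a * y]%g = 1.
    case/dvdn_pfactor: d1 => // m _ em; move: od; rewrite em oddX orbF.
    by move/eqP=> ->.
  move/eqP; rewrite order_eq1 => /eqP ay1.
  have ya : y = a^-1%g by apply: (mulgI a); rewrite ay1 mulgV.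
  have : y \in A :&: <[x]>%g by rewrite inE yx ya groupV aA.
  rewrite ti inE => /eqP y1; move: oy; rewrite y1 order1 => e.
  by have := ltn_expl k.+1 (isT : 1 < 2); rewrite -e.
have ev : 2 %| #[a * y]%g by rewrite dvdn2 od.
rewrite -oy order_dvdn -(divnK ev) mulnC expgM -sq -expgM mulnC divnK //.
by rewrite expg_order.
Qed.

Lemma psiG (gT : finGroupType) (p n k : nat) (A G : {group gT}) (x : gT) :
  prime p -> odd p -> (p.-abelem A)%g -> #|A| = p ^ n -> #[x]%g = 2 ^ k.+1 ->
  (A ><| <[x]> = G)%g -> (forall a, a \in A -> (a ^ x = a^-1)%g) ->
  3 * psi G = (1 + (p ^ n - 1) * p) * (2 ^ (2 * k + 1) + 1) + 3 * (p ^ n * 2 ^ k * 2 ^ k.+1).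
Proof.
move=> pp op abA cA ox sdp hx.
case/sdprodP: (sdp) => _ eG _ ti.
have ox2 : #[x ^+ 2]%g = 2 ^ k.
  rewrite orderXdiv ox; first by rewrite expnS mulKn.
  by rewrite expnS dvdn_mulr.
have hS : 3 * psi <[x ^+ 2]>%g = 2 ^ (2 * k + 1) + 1 by apply: (psi_cyc_pow _ ox2).
have sub : (<[x ^+ 2]> \subset <[x]>)%g by rewrite cycle_subG mem_cycle.
have cx2 : forall a j, a \in A -> (a ^ ((x ^+ 2) ^+ j) = a)%g.
  move=> a j aA; elim: j => [|j IH]; first by rewrite expg0 conjg1.
  by rewrite expgSr conjgM IH expgS expg1 conjgM (hx a aA) conjVg (hx a aA) invgK.
have inner : forall a, a \in A ->
    \sum_(y in <[x]>%g) #[(a * y)%g]%g = #[a]%g * psi <[x ^+ 2]>%g + 2 ^ k * 2 ^ k.+1.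
  move=> a aA; rewrite (bigID (fun y => y \in <[x ^+ 2]>%g)) /=; congr (_ + _).
    rewrite /psi big_distrr /=.
    rewrite (eq_bigl (fun y => y \in <[x ^+ 2]>%g)); last first.
      move=> y /=; apply/andP/idP => [[] //|yq]; by split=> //; apply: (subsetP sub).
    apply: eq_bigr => y /= yq; apply: orderM.
      case/cycleP: yq => j ->; by rewrite /commute conjgC cx2.
    case: (eqVneq a 1%g) => [->|a1]; first by rewrite order1 coprime1n.
    rewrite (abelem_order_p abA aA a1).
    apply: (coprime_dvdr (order_dvdG yq)); rewrite -orderE ox2.
    by rewrite coprime_sym coprimeXl // prime_coprime // dvdn2 op.
  rewrite (eq_bigr (fun _ => 2 ^ k.+1)); last first.
    move=> y /andP[yx yn]; apply: (order_odd_part ti aA yx).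
      by rewrite (order_gen (isT : prime 2) ox yx yn).
    case/cycleP: yx yn => i ->.
    rewrite -(odd_double_half i); case: (odd i) => /= yn; last first.
      by rewrite -muln2 mulnC expgM mem_cycle in yn.
    by rewrite expgS -muln2 mulnC expgM conjgM hx // conjVg cx2.
  rewrite sum_nat_const.
  have -> : #|[pred y in <[x]>%g | y \notin <[x ^+ 2]>%g]| = #|<[x]>%g :\: <[x ^+ 2]>%g|.
    by apply: eq_card => y; rewrite !inE andbC.
  rewrite cardsD (setIidPr sub) -!orderE ox ox2; congr (_ * _).
  by rewrite expnS; lia.
rewrite /psi -eG sum_mulTI // (eq_bigr _ inner) big_split /= -big_distrl /= sum_nat_const cA.
rewrite (big_setD1 1%g) //= order1.
rewrite (eq_bigr (fun _ => p)); last first.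
  by move=> a; rewrite !inE => /andP[a1 aA]; rewrite (abelem_order_p abA aA a1).
rewrite sum_nat_const.
have -> : #|A :\ 1%g| = p ^ n - 1.
  by move: (cardsD1 1%g A); rewrite group1 cA /= => ->; rewrite add1n subn1.
by rewrite mulnDr [3 * (_ * psi _)]mulnCA hS !mulnA.
Qed.

Lemma psiC (p n k : nat) : prime p -> odd p ->
  (p + 1) * (3 * psi_cyclic (p ^ n * 2 ^ k.+1)) = (p ^ (2 * n + 1) + 1) * (2 ^ (2 * k.+1 + 1) + 1).
Proof.
move=> pp op.
set m := p ^ n * 2 ^ k.+1.
have m1 : 1 < m.
  rewrite /m; have : 0 < p ^ n by rewrite expn_gt0 prime_gt0.
  have : 1 < 2 ^ k.+1 by rewrite -{1}(expn0 2) ltn_exp2l.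
  nia.
rewrite /psi_cyclic /Zp m1.
have -> : [set: 'Z_m] = <[Zp1 : 'Z_m]>%g by apply: Zp_cycle.
have o1 : #[Zp1 : 'Z_m]%g = p ^ n * 2 ^ k.+1 by rewrite order_Zp1 Zp_cast.
have cop : coprime (p ^ n) (2 ^ k.+1).
  rewrite coprimeXl // coprime_sym coprimeXl // prime_coprime // dvdn2 op //.
rewrite (psi_cyc_mul cop o1).
have oa : #[(Zp1 : 'Z_m) ^+ (2 ^ k.+1)%N]%g = p ^ n.
  rewrite orderXdiv o1 ?mulnK ?expn_gt0 // dvdn_mull //.
have ob : #[(Zp1 : 'Z_m) ^+ (p ^ n)%N]%g = 2 ^ k.+1.
  rewrite orderXdiv o1 ?mulKn ?expn_gt0 ?prime_gt0 // dvdn_mulr //.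
have h1 := psi_cyc_pow pp oa.
have h2 := psi_cyc_pow (isT : prime 2) ob.
rewrite -h1 -h2 -!mulnA; congr (_ * _); by rewrite mulnCA.
Qed.
Lemma caseA (a b c : nat) : 43 * (7 + a + 1) * ((1 + (6 + a + b) * (7 + a)) * (2 * (1 + c) + 1) + 6 * (7 + a + b) * (1 + c)) <= 19 * ((7 + a) * (7 + a + b) * (7 + a + b) + 1) * (8 * (1 + c) + 1).
Proof.
have -> : 19 * ((7 + a) * (7 + a + b) * (7 + a + b) + 1) * (8 * (1 + c) + 1) = 43 * (7 + a + 1) * ((1 + (6 + a + b) * (7 + a)) * (2 * (1 + c) + 1) + 6 * (7 + a + b) * (1 + c)) + (8256 * c + 7470 * b + 8016 * b * c + 1197 * b * b + 1064 * b * b * c + 2304 * a + 5832 * a * c + 2595 * a * b + 2708 * a * b * c + 171 * a * b * b + 152 * a * b * b * c + 624 * a * a + 1128 * a * a * c + 213 * a * a * b + 218 * a * a * b * c + 42 * a * a * a + 66 * a * a * a * c) by ring.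
by rewrite leq_addr.
Qed.

Lemma caseB3 (a b c : nat) : 43 * (3 + 1) * ((1 + (8 + b) * (3)) * (2 * (1 + c) + 1) + 6 * (9 + b) * (1 + c)) <= 19 * ((3) * (9 + b) * (9 + b) + 1) * (8 * (1 + c) + 1).
Proof.
have -> : 19 * ((3) * (9 + b) * (9 + b) + 1) * (8 * (1 + c) + 1) = 43 * (3 + 1) * ((1 + (8 + b) * (3)) * (2 * (1 + c) + 1) + 6 * (9 + b) * (1 + c)) + (19536 + 19200 * c + 6654 * b + 6144 * b * c + 513 * b * b + 456 * b * b * c) by ring.
by rewrite leq_addr.
Qed.

Lemma caseB5 (a b c : nat) : 43 * (5 + 1) * ((1 + (8 + b) * (5)) * (2 * (1 + c) + 1) + 6 * (9 + b) * (1 + c)) <= 19 * ((5) * (9 + b) * (9 + b) + 1) * (8 * (1 + c) + 1).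
Proof.
have -> : 19 * ((5) * (9 + b) * (9 + b) + 1) * (8 * (1 + c) + 1) = 43 * (5 + 1) * ((1 + (8 + b) * (5)) * (2 * (1 + c) + 1) + 6 * (9 + b) * (1 + c)) + (23760 + 26624 * c + 9972 * b + 9552 * b * c + 855 * b * b + 760 * b * b * c) by ring.
by rewrite leq_addr.
Qed.

Lemma caseC (a b c : nat) : 43 * (5 + 1) * ((1 + (4) * (5)) * (2 * (16 + c) + 1) + 6 * (5) * (16 + c)) <= 19 * ((5) * (5) * (5) + 1) * (8 * (16 + c) + 1).
Proof.
have -> : 19 * ((5) * (5) * (5) + 1) * (8 * (16 + c) + 1) = 43 * (5 + 1) * ((1 + (4) * (5)) * (2 * (16 + c) + 1) + 6 * (5) * (16 + c)) + (6192 + 576 * c) by ring.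
by rewrite leq_addr.
Qed.

Lemma arith (p n k P U : nat) : prime p -> odd p -> 0 < n -> P = p ^ n -> U = 2 ^ k * 2 ^ k ->
  (19 * (p * P * P + 1) * (8 * U + 1) < 43 * (p + 1) * ((1 + (P - 1) * p) * (2 * U + 1) + 6 * P * U))
  = ((p == 3) && (n == 1)) || [&& p == 5, n == 1 & k.+1 <= 2].
Proof.
move=> pp op n0 hP hU.
have U1 : 1 <= U by rewrite hU muln_gt0 expn_gt0.
have p2 : 2 <= p by apply: prime_gt1.
have Pp : p <= P by rewrite hP; case: (n) n0 => // n' _; rewrite expnS leq_pmulr // expn_gt0 prime_gt0.
have nle : forall a b, a <= b -> (b < a) = false by move=> a b h; apply/negbTE; rewrite -leqNgt.
case: (eqVneq p 3) => [p3|p3].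
  subst p; case: (eqVneq n 1) => [n1|n1].
    subst n; rewrite hP /=; lia.
  have P9 : 9 <= P by rewrite hP (_ : 9 = 3 ^ 2) // leq_pexp2l //; lia.
  rewrite /= nle //.
  move: (caseB3 0 (P - 9) (U - 1)).
  have -> : 9 + (P - 9) = P by lia. have -> : 8 + (P - 9) = P - 1 by lia.
  by have -> : 1 + (U - 1) = U by lia.
case: (eqVneq p 5) => [p5|p5].
  subst p; case: (eqVneq n 1) => [n1|n1].
    subst n; rewrite hP /=.
    case: k hU => [|[|k]] hU; first by rewrite hU.
      by rewrite hU.
    have U16 : 16 <= U by rewrite hU !expnS; have := expn_gt0 2 k; nia.
    rewrite nle //; move: (caseC 0 0 (U - 16)).
    by have -> : 16 + (U - 16) = U by lia.
  have P9 : 9 <= P by rewrite hP (leq_trans _ (_ : 5 ^ 2 <= 5 ^ n)) // leq_pexp2l //; lia.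
  rewrite /= nle //.
  move: (caseB5 0 (P - 9) (U - 1)).
  have -> : 9 + (P - 9) = P by lia. have -> : 8 + (P - 9) = P - 1 by lia.
  by have -> : 1 + (U - 1) = U by lia.
have p7 : 7 <= p.
  have : p != 4 by apply/negP => /eqP e; rewrite e in op.
  have : p != 6 by apply/negP => /eqP e; rewrite e in op.
  have : p != 2 by apply/negP => /eqP e; rewrite e in op.
  move: p3 p5 p2; lia.
rewrite /= nle //.
move: (caseA (p - 7) (P - p) (U - 1)).
have -> : 7 + (p - 7) + (P - p) = P by lia.
have -> : 6 + (p - 7) + (P - p) = P - 1 by lia.
have -> : 7 + (p - 7) = p by lia.
by have -> : 1 + (U - 1) = U by lia.
Qed.

Import Num.Theory GRing.Theory.

Theorem corollary3p10 (gT : finGroupType) (p n k : nat) (A G : {group gT}) (x : gT) :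
  prime p -> odd p -> 0 < n -> 0 < k ->
  (p.-abelem A)%g -> #|A| = p ^ n ->
  #[x]%g = 2 ^ k ->
  (A ><| <[x]> = G)%g ->
  (forall a, a \in A -> (a ^ x = a^-1)%g) ->
  ((19%:R / 43%:R : rat) < psi' G)%R <->
  (((p == 3) && (n == 1)) || [&& p == 5, n == 1 & k <= 2]).
Proof.
move=> pp op n0 k0 abA cA ox sdp hx.
case: k k0 ox => [|k] k0 ox; first by rewrite ltnn in k0.
have cG : #|G| = p ^ n * 2 ^ k.+1 by rewrite -(sdprod_card sdp) cA -orderE ox.
have hX := psiG pp op abA cA ox sdp hx.
have hY := psiC n k pp op.
rewrite /psi' cG.
move: hX hY; set X := psi G; set Y := psi_cyclic _ => hX hY.
set P := p ^ n; set U := 2 ^ k * 2 ^ k.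
have e1 : p ^ (2 * n + 1) = p * P * P.
  by rewrite (_ : 2 * n + 1 = (n + n).+1) ?expnS ?expnD /P; [ring|lia].
have e2 : 2 ^ (2 * k.+1 + 1) = 8 * U.
  by rewrite (_ : 2 * k.+1 + 1 = (k + k).+3) ?expnS ?expnD /U; [ring|lia].
have e3 : 2 ^ (2 * k + 1) = 2 * U.
  by rewrite (_ : 2 * k + 1 = (k + k).+1) ?expnS ?expnD /U; [ring|lia].
have e4 : 2 ^ k * 2 ^ k.+1 = 2 * U by rewrite expnS /U; ring.
rewrite e1 e2 in hY; rewrite e3 -mulnA e4 in hX; fold P in hX.
have Y0 : 0 < Y.
  move: hY; case: (Y) => // ; rewrite !muln0 => /esym /eqP; rewrite muln_eq0.
  by rewrite !addn1.
have -> : ((19%:R / 43%:R : rat) < X%:R / Y%:R)%R = (19 * Y < X * 43)%N.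
  rewrite ltr_pdivlMr ?ltr0n // mulrAC ltr_pdivrMr ?ltr0n //.
  by rewrite -!natrM ltr_nat.
rewrite -(@arith p n k P U pp op n0 (erefl _) (erefl _)).
have f1 : 19 * (p * P * P + 1) * (8 * U + 1) = (3 * (p + 1)) * (19 * Y).
  by rewrite -mulnA -hY; ring.
have f2 : 43 * (p + 1) * ((1 + (P - 1) * p) * (2 * U + 1) + 6 * P * U) = (3 * (p + 1)) * (X * 43).
  rewrite (_ : 6 * P * U = 3 * (P * (2 * U))); last by ring.
  by rewrite -hX; ring.
rewrite f1 f2 ltn_pmul2l; first by [].
by rewrite muln_gt0 addn1.
Qed.
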